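(* In the setting below, $(K,\mathbb{V})$ is a symmetric decomposition of the kernel $Q$ of the Unweighted Graph Sampler on $\mathcal{G}$, i.e. for every $G\in\mathcal{G}$ and $z\in\mathcal{Z}$, $\mathbb{V}_G(z)=\mathbb{V}_{G^*}(z)$ for every $G^*$ with $K_z(G,G^* )>0$; and each $K_z\in K$ is reversible with respect to the uniform distribution on $\mathcal{G}$ (indeed $K_z(G,G^* )=K_z(G^*,G)$ for all $G,G^*\in\mathcal{G}$).
   Context: Setting (unweighted graphs). $V$ is a finite vertex set; graphs are either all directed or all undirected with no multiple edges; $uv$ denotes the possible edge from $u$ to $v$ ($uv=vu$ if undirected). $G_0$ is a given graph on $V$ and $\mathcal{F}$ a given set of possible edges. $\mathcal{G}$ is the set of graphs $G$ on $V$ with the same degree sequence as $G_0$ (in- and out-degrees if directed) and $E(G)\cap\mathcal{F}=E(G_0)\cap\mathcal{F}$. $\tilde{\mathcal{F}}$ is the set of possible edges $uv$ that are present in every $G\in\mathcal{G}$ or absent from every $G\in\mathcal{G}$. $N_G(u)=\{v: vu\in E(G), vu\notin\tilde{\mathcal{F}}\}$, $M_G(u)=\{v: uv\notin E(G), uv\notin\tilde{\mathcal{F}}\}$. Unweighted Graph Sampler (one iteration from $G$): $W_{-1}=*$; $W_0\sim$ Uniform$\{v: N_G(v)\ne\emptyset\}$; $n=0$; repeat [$W_{n+1}\sim$ Uniform$(N_G(W_n)\setminus\{W_{n-1}\})$; $W_{n+2}\sim$ Uniform$(M_G(W_{n+1}))$; remove $W_{n+1}W_n$ from and add $W_{n+1}W_{n+2}$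 to the current graph; $n\leftarrow n+2$] until $W_n=W_0$; output the current graph. $Q$ denotes the Markov kernel on $\mathcal{G}$ of this procedure. The sampled sequence $W$ has the form $w_0w_1\cdots w_kw_0$ with $k$ odd; $\mathcal{W}$ is the set of such sequences. Swaps: $a_1b_1\leftrightarrow a_2b_2$ replaces edge $a_1b_1$ with $a_2b_2$; it is viable iff $a_1b_1$ is an edge, $a_2b_2$ is not, and neither lies in $\mathcal{F}$. The swaps corresponding to $w=w_0\cdots w_kw_0$ are $w_1w_0\leftrightarrow w_1w_2, w_3w_2\leftrightarrow w_3w_4,\dots,w_kw_{k-1}\leftrightarrow w_kw_0$ applied in order; they are viable iff each is viable when applied iteratively. $w^r$ denotes the reverse sequence. Kernels: two sequences in $\mathcal{W}$ are equivalent iff identical or each other's reverse; $\mathcal{Z}$ is the set of equivalence classes. For $z\in\mathcal{Z}$ with representative $w$, $K_z$ is the deterministic kernel on $\mathcal{G}$ which from $G$ performs the swaps corresponding to $w$ if viable; otherwise performs those corresponding to $w^r$ if viable; otherwise leaves $G$ unchanged (this does not depend on the representative). $K=\{K_z\}$. $\mathbb{V}_G(z)$ is the probability that the sequence $W$ sampled by the Unweighted Graph Sampler from $G$ lies in $z$ (i.e. equals $w$ or $w^r$). A decomposition $(K,\mathbb{V})$ of $Q$ means $Q(G,\cdot)=\sum_z \mathbb{V}_G(z)K_z(G,\cdot)$; it is symmetric if $\mathbb{V}_G(z)=\mathbb{V}_{G^*}(z)$ whenever $K_z(G,G^* )>0$. *)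

(* Defs.v *)
(* Probabilities are rationals (all sampler probabilities are
   products of reciprocals of cardinalities). *)
From HB Require Import structures.
From mathcomp Require Import all_boot all_order all_algebra.
Set Implicit Arguments. Unset Strict Implicit. Unset Printing Implicit Defensive.
Import Order.TTheory GRing.Theory Num.Theory.
Local Open Scope ring_scope.

Section Sampler.
Variables (V : finType) (dir : bool) (G0 F : {set V * V}).
(* A graph is a set of ordered pairs; (u,v) \in G  means the possible edge uv
   is present.  For undirected graphs (dir = false) the set is symmetric. *)
Definition graph := {set V * V}.

Definition is_graph (G : graph) : bool :=
  [forall u, (u, u) \notin G] &&
  (dir || [forall u, forall v, ((u, v) \in G) == ((v, u) \in G)]).

Definition inF (u v : V) : bool := ((u, v) \in F) || (~~ dir && ((v, u) \in F)).

Definition outdeg (G : graph) (u : V) : nat := #|[set v | (u, v) \in G]|.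
Definition indeg (G : graph) (u : V) : nat := #|[set v | (v, u) \in G]|.

Definition inGG (G : graph) : bool :=
  [&& is_graph G,
      [forall u, (outdeg G u == outdeg G0 u) && (indeg G u == indeg G0 u)] &
      [forall u, forall v, inF u v ==> (((u, v) \in G) == ((u, v) \in G0))]].

Definition Ft (u v : V) : bool :=
  [forall G : {set V * V}, inGG G ==> ((u, v) \in G)] ||
  [forall G : {set V * V}, inGG G ==> ((u, v) \notin G)].

Definition Nset (G : graph) (u : V) : {set V} := [set v | ((v, u) \in G) && ~~ Ft v u].
Definition Mset (G : graph) (u : V) : {set V} := [set v | ((u, v) \notin G) && ~~ Ft u v].

Definition rem_edge (G : graph) (a b : V) : graph :=
  if dir then G :\ (a, b) else G :\ (a, b) :\ (b, a).
Definition add_edge (G : graph) (a b : V) : graph :=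
  if dir then (a, b) |: G else (a, b) |: ((b, a) |: G).

(* One run of the sampler: current graph H, previous vertex W_{n-1} (None = * ),
   current vertex W_n, and the remaining sampled vertices W_{n+1} W_{n+2} ...
   Returns (probability of sampling exactly these vertices and stopping right
   after the last one, resulting graph). *)
Fixpoint run (w0 : V) (H : graph) (prev : option V) (cur : V) (t : seq V)
    : rat * graph :=
  match t with
  | a :: b :: t' =>
      let Ns := Nset H cur :\: (if prev is Some p then [set p] else set0) in
      let Ms := Mset H a in
      let H' := add_edge (rem_edge H a cur) a b in
      let pstep := if (a \in Ns) && (b \in Ms)
                   then (#|Ns|%:R)^-1 * (#|Ms|%:R)^-1 else 0 in
      if t' is [::] then (if b == w0 then (pstep, H') else (0, H'))
      else if b == w0 then (0, H')
      else let r := run w0 H' (Some a) b t' in (pstep * r.1, r.2)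
  | _ => (0, H)
  end.

(* Probability that the sampler started from G samples exactly the sequence w *)
Definition Pw (G : graph) (w : seq V) : rat :=
  match w with
  | w0 :: t =>
      (if Nset G w0 != set0 then (#|[set v | Nset G v != set0]|%:R)^-1 else 0)
      * (run w0 G None w0 t).1
  | [::] => 0
  end.

Definition outw (G : graph) (w : seq V) : graph :=
  match w with w0 :: t => (run w0 G None w0 t).2 | [::] => G end.

(* \mathcal{W}: sequences w0 w1 ... wk w0 with k odd (full sequence incl. closing w0) *)
Definition inW (w : seq V) : bool :=
  [&& odd (size w), (3 <= size w)%N &
      (if w is w0 :: _ then last w0 w == w0 else false)].

Definition viable (H : graph) (a1 b1 a2 b2 : V) : bool :=
  [&& (a1, b1) \in H, a2 != b2, (a2, b2) \notin H, ~~ inF a1 b1 & ~~ inF a2 b2].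

Fixpoint swaps (H : graph) (cur : V) (t : seq V) : option graph :=
  match t with
  | [::] => Some H
  | a :: b :: t' =>
      if viable H a cur a b then swaps (add_edge (rem_edge H a cur) a b) b t'
      else None
  | [:: _] => None
  end.

Definition swaps_seq (G : graph) (w : seq V) : option graph :=
  if w is w0 :: t then swaps G w0 t else Some G.

(* canonical representative of the class {w, rev w} *)
Fixpoint lexle (s1 s2 : seq nat) : bool :=
  match s1, s2 with
  | [::], _ => true
  | _ :: _, [::] => false
  | x :: s1', y :: s2' => (x < y)%N || ((x == y) && lexle s1' s2')
  end.
Definition canon (w : seq V) : seq V :=
  if lexle [seq val (enum_rank x) | x <- w] [seq val (enum_rank x) | x <- rev w]
  then w else rev w.

Definition Kmap (w : seq V) (G : graph) : graph :=
  let r := canon w in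
  match swaps_seq G r with
  | Some H => H
  | None => match swaps_seq G (rev r) with Some H => H | None => G end
  end.
Definition Kker (w : seq V) (G Gs : graph) : rat := (Kmap w G == Gs)%:R.

Definition Vz (G : graph) (w : seq V) : rat :=
  Pw G w + (if rev w != w then Pw G (rev w) else 0).

(* Q(G,G') restricted to sampled sequences of length n *)
Definition Qpart (n : nat) (G Gs : graph) : rat :=
  \sum_(w : n.-tuple V | inW w) Pw G w * (outw G w == Gs)%:R.
Definition Dpart (n : nat) (G Gs : graph) : rat :=
  \sum_(w : n.-tuple V | inW w && (canon w == w)) Vz G w * Kker w G Gs.

Definition unif (G : graph) : rat :=
  if inGG G then (#|[set H : {set V * V} | inGG H]|%:R)^-1 else 0.

End Sampler.

(* Main.v *)
Require Import Defs.
From HB Require Import structures.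
From mathcomp Require Import all_boot all_order all_algebra.
From mathcomp Require Import ring zify.
Import Order.TTheory GRing.Theory Num.Theory.
Set Implicit Arguments. Unset Strict Implicit. Unset Printing Implicit Defensive.

Section S.
Variables (V : finType) (dir : bool) (G0 F : {set V * V}).
Implicit Types (H G : {set V * V}) (a b c x y u v : V).

Definition eis (a b x y : V) : bool :=
  ((x == a) && (y == b)) || (~~ dir && (x == b) && (y == a)).
Definition step (H : {set V * V}) (c a b : V) := add_edge dir (rem_edge dir H a c) a b.
Arguments eis : simpl never.

Lemma mem_step H c a b x y :
  ((x, y) \in step H c a b) = eis a b x y || (((x, y) \in H) && ~~ eis a c x y).
Proof.
rewrite /step /add_edge /rem_edge /eis; case: dir; rewrite /= !inE !xpair_eqE;
by case: (x == a); case: (y == b); case: (x == b); case: (y == a);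
  case: (x == c); case: (y == c); case: ((x, y) \in H).
Qed.

Lemma graph_noloop H u : is_graph dir H -> (u, u) \notin H.
Proof. by case/andP=> /forallP. Qed.

Lemma graph_sym H x y : is_graph dir H -> ~~ dir -> ((x, y) \in H) = ((y, x) \in H).
Proof.
case/andP=> _ h nd; move: h; rewrite (negbTE nd) /= => /forallP /(_ x) /forallP /(_ y).
by move/eqP.
Qed.

Lemma mem_eis H a c x y : is_graph dir H -> eis a c x y -> ((x, y) \in H) = ((a, c) \in H).
Proof.
move=> gH; rewrite /eis; case/orP=> [/andP[/eqP-> /eqP->] //|].
case/andP=> /andP[nd /eqP->] /eqP->; exact: graph_sym.
Qed.

Lemma step_graph H c a b : is_graph dir H -> a != b -> is_graph dir (step H c a b).
Proof.
move=> gH nab; apply/andP; split.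
  apply/forallP=> u; rewrite mem_step (negbTE (graph_noloop u gH)) /= orbF /eis.
  apply/negP; case/orP=> /andP; [case=> /eqP-> /eqP| case=> /andP[_ /eqP->] /eqP] => e;
    by rewrite e eqxx in nab.
case nd: dir => //=; apply/forallP=> x; apply/forallP=> y; apply/eqP.
rewrite !mem_step (graph_sym x y gH) ?nd // /eis nd /=.
by case: (x == a); case: (y == b); case: (x == b); case: (y == a);
  case: (x == c); case: (y == c).
Qed.


Lemma step_undo H c a b : is_graph dir H -> (a, c) \in H -> (a, b) \notin H ->
  step (step H c a b) b a c = H.
Proof.
move=> gH hac hab; apply/setP=> [[x y]]; rewrite !mem_step.
case E1: (eis a c x y); first by rewrite (mem_eis gH E1) hac.
case E2: (eis a b x y); rewrite /= ?andbT ?andbF //.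
by rewrite (mem_eis gH E2) (negbTE hab).
Qed.

Lemma eis_refl a b : eis a b a b.
Proof. by rewrite /eis !eqxx. Qed.

Lemma viable_undo H c a b : is_graph dir H -> viable dir F H a c a b ->
  viable dir F (step H c a b) a b a c.
Proof.
move=> gH /and5P[hac nab hab nFc nFb]; apply/and5P; split => //.
- by rewrite mem_step eis_refl.
- by apply/eqP=> e; move: hac; rewrite -e (negbTE (graph_noloop a gH)).
- rewrite mem_step eis_refl andbF orbF /eis eqxx /= (negbTE nab) andbF orbF.
  by apply/eqP=> e; move: hac; rewrite e (negbTE hab).
Qed.

Lemma swaps_cat H c s t : ~~ odd (size s) ->
  swaps dir F H c (s ++ t) = obind (fun H' => swaps dir F H' (last c s) t) (swaps dir F H c s).
Proof.
have [n] := ubnP (size s); elim: n s H c => // n IH [|a [|b s]] H c //= lt ev.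
case: ifP => // _; apply: IH; first by rewrite ltnS in lt; exact: ltnW.
by move: ev; rewrite /= negbK.
Qed.

Lemma swaps_even H c t H' : swaps dir F H c t = Some H' -> ~~ odd (size t).
Proof.
have [n] := ubnP (size t); elim: n t H c => // n IH [|a [|b t]] H c //= lt.
case: ifP => // _ /IH -> //; by rewrite ltnS in lt; exact: ltnW.
Qed.

Lemma last_rev (x : V) s : last x (rev s) = head x s.
Proof. by case: s => // y s; rewrite rev_cons last_rcons. Qed.

Lemma head_belast (x : V) s : head (last x s) (belast x s) = x.
Proof. by case: s. Qed.

Lemma rev_belast2 (c a : V) s : rev (c :: a :: s) = rev s ++ [:: a; c].
Proof. by rewrite rev_cons rev_cons -!cats1 -catA. Qed.

Lemma swaps_graph H c t H' : is_graph dir H -> swaps dir F H c t = Some H' -> is_graph dir H'.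
Proof.
have [n] := ubnP (size t); elim: n t H c => // n IH [|a [|b t]] H c //= lt gH.
- by case=> <-.
case: ifP => // /and5P[_ nab _ _ _]; apply: IH; last exact: step_graph.
by rewrite ltnS in lt; exact: ltnW.
Qed.

Lemma swaps_rev H c t H' : is_graph dir H -> swaps dir F H c t = Some H' ->
  swaps dir F H' (last c t) (rev (belast c t)) = Some H.
Proof.
have [n] := ubnP (size t); elim: n t H c H' => // n IH [|a [|b t]] H c H' //= lt gH; try by case=> ->.
case: ifP => // vi hs.
have gH1 : is_graph dir (step H c a b) by apply: step_graph => //; case/and5P: vi.
have := IH t _ b _ _ gH1 hs; rewrite ltnS in lt; move/(_ (ltnW lt)) => ih.
rewrite rev_belast2 swaps_cat; last by rewrite size_rev size_belast (swaps_even hs).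
rewrite ih /= last_rev head_belast (viable_undo gH vi).
by case/and5P: vi => hac _ hab _ _; move: (step_undo gH hac hab); rewrite /step => ->.
Qed.

Fixpoint touched c (t : seq V) x y : bool :=
  if t is a :: b :: t' then [|| eis a c x y, eis a b x y | touched b t' x y] else false.
Fixpoint firstrem c (t : seq V) x y : bool :=
  if t is a :: b :: t' then
    (if eis a c x y then true else if eis a b x y then false else firstrem b t' x y)
  else false.

Lemma swaps_touched H c t H' x y : is_graph dir H -> swaps dir F H c t = Some H' ->
  touched c t x y -> ((x, y) \in H) = firstrem c t x y.
Proof.
have [n] := ubnP (size t); elim: n t H c H' => // n IH [|a [|b t]] H c H' //= lt gH.
case: ifP => // vi hs; case/and5P: vi => hac nab hab _ _.
case E1: (eis a c x y) => /=; first by rewrite (mem_eis gH E1).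
case E2: (eis a b x y) => /=; first by rewrite (mem_eis gH E2) (negbTE hab).
move=> ht; have e : ((x, y) \in step H c a b) = ((x, y) \in H) by rewrite mem_step E1 E2 /= andbT.
rewrite -e.
apply: (IH _ _ _ _ _ (step_graph _ gH nab) hs) => //.
by rewrite ltnS in lt; exact: ltnW.
Qed.

Lemma swaps_untouched H c t H' x y : swaps dir F H c t = Some H' ->
  ~~ touched c t x y -> ((x, y) \in H') = ((x, y) \in H).
Proof.
have [n] := ubnP (size t); elim: n t H c H' => // n IH [|a [|b t]] H c H' //= lt;
  try by case=> ->.
case: ifP => // vi hs; rewrite negb_or => /andP[E1]; rewrite negb_or => /andP[E2 ht].
rewrite (IH _ _ _ _ _ hs ht); last by rewrite ltnS in lt; exact: ltnW.
by rewrite -[add_edge _ _ _ _]/(step H c a b) mem_step (negbTE E1) (negbTE E2) andbT.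
Qed.

Lemma swaps_parity H c t H' H'' : is_graph dir H -> swaps dir F H c t = Some H' ->
  swaps dir F H' c t = Some H'' -> H' = H.
Proof.
move=> gH h1 h2; have gH' := swaps_graph gH h1.
apply/setP=> [[x y]]; case T: (touched c t x y).
  by rewrite (swaps_touched gH h1 T) (swaps_touched gH' h2 T).
by rewrite (swaps_untouched h1 (negbT T)).
Qed.

Lemma rev_cons_last (w0 : V) t : rev (w0 :: t) = last w0 t :: rev (belast w0 t).
Proof. by rewrite lastI rev_rcons. Qed.

Lemma swaps_seq_rev G w H : is_graph dir G -> swaps_seq dir F G w = Some H ->
  swaps_seq dir F H (rev w) = Some G.
Proof.
case: w => [|w0 t] gG /=; first by case=> ->.
by move=> h; rewrite rev_cons_last /=; apply: swaps_rev.
Qed.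

Lemma swaps_seq_graph G w H : is_graph dir G -> swaps_seq dir F G w = Some H -> is_graph dir H.
Proof. case: w => [|w0 t] gG /=; [by case=> <- | exact: swaps_graph]. Qed.

Lemma swaps_seq_parity G w H H2 : is_graph dir G -> swaps_seq dir F G w = Some H ->
  swaps_seq dir F H w = Some H2 -> H = G.
Proof. case: w => [|w0 t] gG /=; [by case=> <- | exact: swaps_parity]. Qed.

Lemma KmapP w G :
  [\/ swaps_seq dir F G (canon w) = Some (Kmap dir F w G),
      swaps_seq dir F G (canon w) = None /\
        swaps_seq dir F G (rev (canon w)) = Some (Kmap dir F w G) |
      [/\ swaps_seq dir F G (canon w) = None,
          swaps_seq dir F G (rev (canon w)) = None & Kmap dir F w G = G]].
Proof.
rewrite /Kmap; case E: (swaps_seq _ _ _ _) => [H|]; first by constructor 1.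
by case E': (swaps_seq _ _ _ _) => [H|]; [constructor 2 | constructor 3].
Qed.

Lemma Kmap_invol w G : is_graph dir G -> Kmap dir F w (Kmap dir F w G) = G.
Proof.
move=> gG; set r := canon w.
have [E|[E E']|[E E' HG]] := KmapP w G; rewrite -/r in E *; last by rewrite !HG.
- set H := Kmap dir F w G in E *; have gH := swaps_seq_graph gG E.
  have L := swaps_seq_rev gG E.
  have [E2|[E2 E2']|[E2 E2' _]] := KmapP w H; rewrite -/r in E2 *.
  + have eHG := swaps_seq_parity gG E E2.
    by rewrite [in LHS]eHG; exact: eHG.
  + by move: E2'; rewrite L => -[<-].
  + by rewrite L in E2'.
- set H := Kmap dir F w G in E' *; have L := swaps_seq_rev gG E'; rewrite revK in L.
  have [E2|[E2 E2']|[E2 E2' _]] := KmapP w H; rewrite -/r in E2 *.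
  + by move: E2; rewrite L => -[<-].
  + by rewrite L in E2.
  + by rewrite L in E2.
Qed.

Lemma canon_cases (w : seq V) : canon w = w \/ canon w = rev w.
Proof. by rewrite /canon; case: ifP; [left|right]. Qed.

Lemma Kmap_viable w G H : is_graph dir G -> swaps_seq dir F G w = Some H ->
  Kmap dir F w G = H.
Proof.
move=> gG E; have gH := swaps_seq_graph gG E; have L := swaps_seq_rev gG E.
have [C|C] := canon_cases w.
  have [E1|[E1 _]|[E1 _ _]] := KmapP w G; rewrite C E in E1 => //; by case: E1.
have [E1|[E1 E2]|[E1 E2 _]] := KmapP w G; rewrite C in E1.
- have eGH := swaps_seq_parity gH L E1.
  have L2 := swaps_seq_rev gG E1; rewrite revK in L2.
  have gK := swaps_seq_graph gG E1.
  have := swaps_seq_parity gK L2; rewrite -eGH => /(_ _ E) <-. by [].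
- by move: E2; rewrite C revK E => -[<-].
- by rewrite C revK E in E2.
Qed.

Lemma Ft_refl u : Ft dir G0 F u u.
Proof.
rewrite /Ft; apply/orP; right; apply/forallP=> G; apply/implyP=> /and3P[gG _ _].
exact: graph_noloop.
Qed.

Lemma inF_Ft u v : inF dir F u v -> Ft dir G0 F u v.
Proof.
move=> h; rewrite /Ft; case h0: ((u, v) \in G0); apply/orP; [left|right];
  apply/forallP=> G; apply/implyP=> /and3P[_ _ /forallP/(_ u)/forallP/(_ v)/implyP/(_ h)/eqP ->];
  by rewrite h0.
Qed.

Definition pstep H (p : option V) c a b : rat :=
  let Ns := Nset dir G0 F H c :\: (if p is Some q then [set q] else set0) in
  let Ms := Mset dir G0 F H a in
  if (a \in Ns) && (b \in Ms) then ((#|Ns|%:R)^-1 * (#|Ms|%:R)^-1)%R else 0%R.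

Fixpoint gr H c (t : seq V) : {set V * V} :=
  if t is a :: b :: t' then gr (step H c a b) b t' else H.

Lemma run_cons w0 H p c a b t : run dir G0 F w0 H p c (a :: b :: t) =
  if t is [::] then (if b == w0 then (pstep H p c a b, step H c a b) else (0%R, step H c a b))
  else if b == w0 then (0%R, step H c a b)
  else ((pstep H p c a b * (run dir G0 F w0 (step H c a b) (Some a) b t).1)%R,
        (run dir G0 F w0 (step H c a b) (Some a) b t).2).
Proof. by []. Qed.

Lemma fst_pair (A B : Type) (x : A) (y : B) : (x, y).1 = x. Proof. by []. Qed.
Lemma snd_pair (A B : Type) (x : A) (y : B) : (x, y).2 = y. Proof. by []. Qed.

Lemma gr_cons H c a b t : gr H c (a :: b :: t) = gr (step H c a b) b t.
Proof. by []. Qed.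

Lemma run_graph w0 H p c t : (run dir G0 F w0 H p c t).1 != 0%R ->
  (run dir G0 F w0 H p c t).2 = gr H c t.
Proof.
have [n] := ubnP (size t); elim: n t H p c => // n IH [|a [|b t]] H p c //; try by rewrite eqxx.
move=> lt; rewrite run_cons gr_cons; case: t IH lt => [|x t] IH lt; case: (b == w0);
  rewrite ?fst_pair ?snd_pair ?eqxx //.
rewrite mulf_eq0 negb_or => /andP[_ hr].
by rewrite IH //; rewrite ltnS in lt; exact: ltnW.
Qed.

Lemma pstep_facts H p c a b : pstep H p c a b != 0%R ->
  [/\ (a, c) \in H, ~~ Ft dir G0 F a c, p != Some a, (a, b) \notin H & ~~ Ft dir G0 F a b].
Proof.
rewrite /pstep; case: ifP; last by rewrite eqxx.
case/andP; rewrite !inE => /andP[hp /andP[hac hF]] /andP[hab hF'] _; split => //.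
by case: p hp => [q|] //; rewrite inE eq_sym.
Qed.

Lemma pstep_viable H p c a b : pstep H p c a b != 0%R -> viable dir F H a c a b.
Proof.
case/pstep_facts=> hac hF _ hab hF'; apply/and5P; split => //.
- by apply/eqP=> e; move: hF'; rewrite e Ft_refl.
- by apply/negP=> /inF_Ft; apply/negP.
- by apply/negP=> /inF_Ft; apply/negP.
Qed.

Lemma swaps_cons H c a b t : swaps dir F H c (a :: b :: t) =
  if viable dir F H a c a b then swaps dir F (step H c a b) b t else None.
Proof. by []. Qed.

Lemma run_swaps w0 H p c t : (run dir G0 F w0 H p c t).1 != 0%R ->
  swaps dir F H c t = Some (gr H c t).
Proof.
have [n] := ubnP (size t); elim: n t H p c => // n IH [|a [|b t]] H p c //; try by rewrite eqxx.
move=> lt; rewrite run_cons gr_cons swaps_cons; case: t IH lt => [|x t] IH lt; case: (b == w0);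
  rewrite ?fst_pair ?eqxx //.
  by move=> hp; rewrite (pstep_viable hp).
rewrite mulf_eq0 negb_or => /andP[hp hr].
rewrite (pstep_viable hp); apply: (IH _ _ _ _ _ hr).
by rewrite ltnS in lt; exact: ltnW.
Qed.

Lemma Pw_Kmap G w : is_graph dir G -> Pw dir G0 F G w != 0%R ->
  Kmap dir F w G = outw dir G0 F G w.
Proof.
case: w => [|w0 t] gG; first by rewrite /Pw eqxx.
rewrite /Pw /outw mulf_eq0 negb_or => /andP[_ hr].
by apply: Kmap_viable => //=; rewrite (run_swaps hr) run_graph.
Qed.

Lemma Mcard_step H c a b : is_graph dir H -> (a, c) \in H -> ~~ Ft dir G0 F a c ->
  b \in Mset dir G0 F H a -> a != b ->
  (c \in Mset dir G0 F (step H c a b) a) /\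
  #|Mset dir G0 F (step H c a b) a| = #|Mset dir G0 F H a|.
Proof.
move=> gH hac hFc hb nab.
have nac : a != c by apply/eqP=> e; move: hac; rewrite -e (negbTE (graph_noloop a gH)).
have ncb : c != b by apply/eqP=> e; move: hb; rewrite inE -e hac.
have E : Mset dir G0 F (step H c a b) a = c |: (Mset dir G0 F H a :\ b).
  apply/setP=> v; rewrite !inE mem_step /eis eqxx /= (negbTE nab) (negbTE nac) !andbF !orbF.
  case: (eqVneq v c) => [->|nvc]; first by rewrite hac hFc (negbTE ncb).
  by rewrite /= andbT negb_or; case: (v == b); case: ((a, v) \in H).
rewrite E !inE eqxx; split => //.
rewrite cardsU1 !inE hac andbF /= (cardsD1 b (Mset _ _ _ _ _)) hb.
by rewrite add1n.
Qed.

Lemma cardsD1_mem (T : finType) (A : {set T}) (i j : T) : i \in A -> j \in A ->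
  #|A :\ i| = #|A :\ j|.
Proof.
move=> hx hy; have := cardsD1 i A; rewrite (cardsD1 j A) hx hy => /eqP.
by rewrite eqn_add2l => /eqP ->.
Qed.

Hypothesis hG0 : is_graph dir G0.

Lemma inGG_G0 : inGG dir G0 F G0.
Proof.
apply/and3P; split => //; first by apply/forallP=> u; rewrite !eqxx.
by apply/forallP=> u; apply/forallP=> v; apply/implyP.
Qed.

Lemma Ft_mem H u v : inGG dir G0 F H -> Ft dir G0 F u v -> ((u, v) \in H) = ((u, v) \in G0).
Proof.
move=> hH; case/orP=> /forallP h.
  by rewrite (implyP (h H) hH) (implyP (h G0) inGG_G0).
by rewrite (negbTE (implyP (h H) hH)) (negbTE (implyP (h G0) inGG_G0)).
Qed.

Lemma Ncard_GG G Gs v : inGG dir G0 F G -> inGG dir G0 F Gs ->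
  #|Nset dir G0 F G v| = #|Nset dir G0 F Gs v|.
Proof.
have key : forall H, inGG dir G0 F H ->
    #|Nset dir G0 F H v| + #|[set u | ((u, v) \in G0) && Ft dir G0 F u v]| = indeg G0 v.
  move=> H hH; have := hH; case/and3P=> _ /forallP/(_ v)/andP[_ /eqP <-] _.
  rewrite /indeg -(cardsID [set u | Ft dir G0 F u v] [set u | (u, v) \in H]) addnC.
  congr (_ + _); apply: eq_card => u.
  + by rewrite !inE; case hF: (Ft _ _ _ u v); rewrite ?andbT ?andbF // (Ft_mem hH hF).
  + by rewrite !inE andbC.
move=> hG hGs; apply/eqP; rewrite -(eqn_add2r #|[set u | ((u, v) \in G0) && Ft dir G0 F u v]|).
by rewrite !key.
Qed.

Fixpoint qv w0 H (p : option V) c (t : seq V) : rat :=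
  if t is a :: b :: t' then
    ((if b == w0 then 0 else pstep H p c a b) * qv w0 (step H c a b) (Some a) b t')%R
  else 1%R.
Fixpoint pv (p : option V) (t : seq V) : option V :=
  if t is a :: b :: t' then pv (Some a) t' else p.

Lemma even2 (x y : V) s : ~~ odd (size [:: x, y & s]) -> ~~ odd (size s).
Proof. by rewrite /= negbK. Qed.

Lemma run_cons2 w0 H p c a b t : t != [::] -> run dir G0 F w0 H p c (a :: b :: t) =
  if b == w0 then (0%R, step H c a b)
  else ((pstep H p c a b * (run dir G0 F w0 (step H c a b) (Some a) b t).1)%R,
        (run dir G0 F w0 (step H c a b) (Some a) b t).2).
Proof. by case: t. Qed.

Lemma run_cat2 w0 H p c s a b : ~~ odd (size s) ->
  (run dir G0 F w0 H p c (s ++ [:: a; b])).1 =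
  (qv w0 H p c s * (if b == w0 then pstep (gr H c s) (pv p s) (last c s) a b else 0))%R.
Proof.
have [n] := ubnP (size s); elim: n s H p c => // n IH [|x [|y s]] H p c // lt ev.
  by rewrite /= mul1r; case: (b == w0).
rewrite cat_cons cat_cons run_cons2; last by case: s {lt ev IH}.
rewrite [qv _ _ _ _ _]/= -mulrA; case: (y == w0); first by rewrite mul0r.
rewrite fst_pair IH //; first by rewrite ltnS in lt; exact: ltnW.
exact: even2 ev.
Qed.

Lemma qv_cat w0 H p c s s' : ~~ odd (size s) ->
  qv w0 H p c (s ++ s') = (qv w0 H p c s * qv w0 (gr H c s) (pv p s) (last c s) s')%R.
Proof.
have [n] := ubnP (size s); elim: n s H p c => // n IH [|x [|y s]] H p c // lt ev.
  by rewrite /= mul1r.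
rewrite cat_cons cat_cons [qv _ _ _ _ (x :: _)]/= [qv _ _ _ _ (x :: y :: s)]/= -mulrA IH //; [by rewrite ltnS in lt; exact: ltnW | exact: even2 ev].
Qed.

Lemma gr_cat H c s s' : ~~ odd (size s) -> gr H c (s ++ s') = gr (gr H c s) (last c s) s'.
Proof.
have [n] := ubnP (size s); elim: n s H c => // n IH [|x [|y s]] H c // lt ev.
rewrite cat_cons cat_cons !gr_cons IH //; [by rewrite ltnS in lt; exact: ltnW | exact: even2 ev].
Qed.

Lemma pv_cat p s s' : ~~ odd (size s) -> pv p (s ++ s') = pv (pv p s) s'.
Proof.
have [n] := ubnP (size s); elim: n s p => // n IH [|x [|y s]] p // lt ev.
rewrite cat_cons cat_cons /= IH //; [by rewrite ltnS in lt; exact: ltnW | exact: even2 ev].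
Qed.

Lemma run_last w0 H p c t : (run dir G0 F w0 H p c t).1 != 0%R -> last c t = w0.
Proof.
have [n] := ubnP (size t); elim: n t H p c => // n IH [|a [|b t]] H p c //; try by rewrite eqxx.
move=> lt; rewrite run_cons; case: t IH lt => [|x t] IH lt; case: (eqVneq b w0) => [->|nb];
  rewrite ?fst_pair ?eqxx //.
rewrite mulf_eq0 negb_or => /andP[_ hr] /=; apply: (IH _ _ _ _ _ hr).
by rewrite ltnS in lt; exact: ltnW.
Qed.

Definition ex (p : option V) : {set V} := if p is Some q then [set q] else set0.

Lemma pstepE H p c a b : a \in Nset dir G0 F H c :\: ex p -> b \in Mset dir G0 F H a ->
  pstep H p c a b =
  ((#|Nset dir G0 F H c :\: ex p|%:R)^-1 * (#|Mset dir G0 F H a|%:R)^-1)%R.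
Proof. by rewrite /pstep /ex => ha hb; rewrite ha hb. Qed.

Lemma pstep_mem H p c a b : pstep H p c a b != 0%R ->
  a \in Nset dir G0 F H c :\: ex p /\ b \in Mset dir G0 F H a.
Proof. by rewrite /pstep /ex; case: ifP => [/andP[] //|]; rewrite eqxx. Qed.

Lemma card_neq0R (A : {set V}) x : x \in A -> (#|A|%:R != 0 :> rat)%R.
Proof.
move=> hx; rewrite pnatr_eq0 -lt0n; apply/card_gt0P; by exists x.
Qed.

Lemma run_first w0 H p c a b t : (run dir G0 F w0 H p c (a :: b :: t)).1 != 0%R ->
  pstep H p c a b != 0%R.
Proof.
rewrite run_cons; case: t => [|x t]; case: (b == w0); rewrite ?fst_pair ?eqxx //.
by rewrite mulf_eq0 negb_or => /andP[].
Qed.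

Lemma inN H c a : ((a, c) \in H) -> ~~ Ft dir G0 F a c -> a \in Nset dir G0 F H c.
Proof. by rewrite inE => -> ->. Qed.

Lemma sfx w0 t : forall H q c, is_graph dir H -> c != w0 ->
  (run dir G0 F w0 H (Some q) c t).1 != 0%R ->
  [/\ gr (gr H c t) w0 (rev (belast c t)) = H, last w0 (rev (belast c t)) = c,
      pv None (rev (belast c t)) = Some (head c t) &
      ((run dir G0 F w0 H (Some q) c t).1 * (#|Nset dir G0 F H c :\ q|%:R) =
       qv w0 (gr H c t) None w0 (rev (belast c t)) *
         (#|Nset dir G0 F (gr H c t) w0|%:R))%R].
Proof.
have [n] := ubnP (size t); elim: n t => // n IH [|a [|b t]] // lt H q c gH ncw;
  try by rewrite eqxx.
move=> hr0; have hp := run_first hr0.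
have [hac hFc hqa hab hFb] := pstep_facts hp.
have [hNa hMb] := pstep_mem hp.
have nab : a != b by apply/eqP=> e; move: hFb; rewrite -e Ft_refl.
have gH1 : is_graph dir (step H c a b) by exact: step_graph.
have [hMc eM] := Mcard_step gH hac hFc hMb nab.
have hNb : a \in Nset dir G0 F (step H c a b) b by apply: inN => //; rewrite mem_step eis_refl.
case: t IH lt hr0 => [|x [|y t]] IH lt hr0.
  move: hr0; rewrite run_cons; case: (eqVneq b w0) => [ebw|]; rewrite ?fst_pair ?eqxx // => _.
  have -> : rev (belast c [:: a; b]) = [:: a; c] by [].
  have -> : gr H c [:: a; b] = step H c a b by [].
  have -> : forall K, gr K w0 [:: a; c] = step K w0 a c by [].
  split => //; first by rewrite -ebw step_undo.
  rewrite /qv (negbTE ncw) mulr1 !pstepE //; try by rewrite /ex setD0 -ebw.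
  rewrite /ex setD0 -ebw eM.
  have n1 := card_neq0R hNa; have n2 := card_neq0R hMb; have n3 := card_neq0R hNb.
  rewrite /ex in n1.
  by field; rewrite n1 n2 n3.
  by move: hr0; rewrite run_cons2 //; case: (b == w0); rewrite ?fst_pair ?eqxx //= mulr0 eqxx.
move: hr0; rewrite run_cons2 //; case: (eqVneq b w0) => [->|nbw]; rewrite ?fst_pair ?eqxx //.
rewrite mulf_eq0 negb_or => /andP[_ hr].
have lt' : size [:: x, y & t] < n by move: lt; rewrite /= ltnS => /ltnW.
have [ig il ip ie] := IH [:: x, y & t] lt' (step H c a b) a b gH1 nbw hr.
have hp2 := run_first hr.
have [_ _ hax _ _] := pstep_facts hp2.
have [hNx _] := pstep_mem hp2.
have ev : ~~ odd (size (rev (belast b [:: x, y & t]))).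
  by rewrite size_rev size_belast; exact: (swaps_even (run_swaps hr)).
have -> : rev (belast c [:: a, b, x, y & t]) = rev (belast b [:: x, y & t]) ++ [:: a; c].
  by rewrite -rev_belast2.
rewrite gr_cons gr_cat // ig il last_cat il pv_cat // ip qv_cat // il ip ig.
split => //; first by rewrite /= -/(step _ _ _ _) step_undo.
have hNa1 : a \in Nset dir G0 F (step H c a b) b :\: ex (Some x).
  by rewrite /ex !inE eq_sym; move: hax; rewrite /= eq_sym => -> /=; move: hNb; rewrite inE.
rewrite [qv _ _ _ _ [:: a; c]]/= ifN_eq // mulr1 (pstepE hNa1 hMc) (pstepE hNa hMb) eM.
rewrite [in RHS]mulrAC -ie.
have hx : x \in Nset dir G0 F (step H c a b) b by move: hNx; rewrite !inE => /andP[].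
rewrite /ex -/(ex (Some x)) (cardsD1_mem hNb hx).
have n1 := card_neq0R hNa; have n2 := card_neq0R hMb; have n3 := card_neq0R hNa1.
move: n1 n2 n3; rewrite /ex => n1 n2 n3.
by field; rewrite n1 n2 n3.
Qed.

Lemma Nne0_GG G Gs v : inGG dir G0 F G -> inGG dir G0 F Gs ->
  (Nset dir G0 F Gs v != set0) = (Nset dir G0 F G v != set0).
Proof. by move=> hG hGs; rewrite -!cards_eq0 (Ncard_GG v hG hGs). Qed.

Lemma DB0 G Gs w : inGG dir G0 F G -> inGG dir G0 F Gs ->
  swaps_seq dir F G w = Some Gs -> Pw dir G0 F G w != 0%R ->
  Pw dir G0 F Gs (rev w) = Pw dir G0 F G w.
Proof.
case: w => [|w0 t] hG hGs; first by rewrite /Pw eqxx.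
have gG : is_graph dir G by case/and3P: hG.
move=> /= hs; rewrite rev_cons_last /Pw mulf_eq0 negb_or => /andP[hf hr].
rewrite (run_last hr).
have eGs : Gs = gr G w0 t by move: hs; rewrite (run_swaps hr) => -[].
have ef : ((if Nset dir G0 F Gs w0 != set0
           then (#|[set v | Nset dir G0 F Gs v != set0]|%:R)^-1 else 0) =
          (if Nset dir G0 F G w0 != set0
           then (#|[set v | Nset dir G0 F G v != set0]|%:R)^-1 else 0) :> rat)%R.
  rewrite (Nne0_GG w0 hG hGs); congr (if _ then (_%:R)^-1 else _)%R.
  by apply: eq_card => v; rewrite !inE (Nne0_GG v hG hGs).
rewrite ef; congr (_ * _)%R; rewrite -/(run _ _ _ _ _ _ _ _) in hr *.
case: t hr eGs hs => [|a [|b [|x [|y t]]]] hr eGs hs //; try by rewrite eqxx in hr.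
- move: hr; rewrite run_cons; case: (eqVneq b w0) => [ebw|]; rewrite ?fst_pair ?eqxx // => hp.
  by case: (pstep_facts hp) => hac _ _; rewrite ebw hac.
- by move: hr; rewrite run_cons2 //; case: (b == w0); rewrite ?fst_pair ?eqxx //= mulr0 eqxx.
move: hr; rewrite run_cons2 //; case: (eqVneq b w0) => [->|nbw]; rewrite ?fst_pair ?eqxx //.
rewrite mulf_eq0 negb_or => /andP[hp hr1].
have [hac hFc _ hab hFb] := pstep_facts hp.
have [hNa hMb] := pstep_mem hp.
have nab : a != b by apply/eqP=> e; move: hFb; rewrite -e Ft_refl.
have gH1 : is_graph dir (step G w0 a b) by exact: step_graph.
have [hMc eM] := Mcard_step gG hac hFc hMb nab.
have hNb : a \in Nset dir G0 F (step G w0 a b) b by apply: inN => //; rewrite mem_step eis_refl.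
have [ig il ip ie] := sfx gH1 nbw hr1.
have hp2 := run_first hr1.
have [_ _ hax _ _] := pstep_facts hp2.
have [hNx _] := pstep_mem hp2.
have ev : ~~ odd (size (rev (belast b [:: x, y & t]))).
  by rewrite size_rev size_belast; exact: (swaps_even (run_swaps hr1)).
have -> : rev (belast w0 [:: a, b, x, y & t]) = rev (belast b [:: x, y & t]) ++ [:: a; w0].
  by rewrite -rev_belast2.
rewrite run_cat2 // eqxx eGs gr_cons ig il ip.
have hNa1 : a \in Nset dir G0 F (step G w0 a b) b :\: ex (Some x).
  by rewrite /ex !inE eq_sym; move: hax; rewrite /= eq_sym => -> /=; move: hNb; rewrite inE.
rewrite (pstepE hNa1 hMc) (pstepE hNa hMb) eM.
have hx : x \in Nset dir G0 F (step G w0 a b) b by move: hNx; rewrite !inE => /andP[].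
rewrite -gr_cons -eGs in ie.
rewrite -(Ncard_GG w0 hG hGs) in ie.
have hN0 : a \in Nset dir G0 F G w0 by move: hNa; rewrite /ex setD0.
have n0 := card_neq0R hN0.
have eq : qv w0 Gs None w0 (rev (belast b [:: x, y & t])) =
    ((run dir G0 F w0 (step G w0 a b) (Some a) b [:: x, y & t]).1 *
     #|Nset dir G0 F (step G w0 a b) b :\ a|%:R / #|Nset dir G0 F G w0|%:R)%R.
  by rewrite ie mulfK.
rewrite -gr_cons -eGs eq /ex setD0 -/(ex (Some x)) (cardsD1_mem hNb hx).
have n2 := card_neq0R hMb; have n3 := card_neq0R hNa1.
move: n3; rewrite /ex => n3.
by field; rewrite n0 n2 n3.
Qed.

Lemma DB G Gs ws : inGG dir G0 F G -> inGG dir G0 F Gs ->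
  swaps_seq dir F G ws = Some Gs -> Pw dir G0 F Gs (rev ws) = Pw dir G0 F G ws.
Proof.
move=> hG hGs hs; have gG : is_graph dir G by case/and3P: hG.
case: (eqVneq (Pw dir G0 F G ws) 0%R) => h; last exact: DB0.
case: (eqVneq (Pw dir G0 F Gs (rev ws)) 0%R) => h2; first by rewrite h h2.
have L := swaps_seq_rev gG hs.
by have := DB0 hGs hG L h2; rewrite revK => ->.
Qed.

Lemma Pw_swaps G ws : Pw dir G0 F G ws != 0%R -> exists H, swaps_seq dir F G ws = Some H.
Proof.
case: ws => [|w0 t]; first by rewrite /Pw eqxx.
rewrite /Pw mulf_eq0 negb_or => /andP[_ hr]; exists (gr G w0 t); exact: run_swaps hr.
Qed.

Lemma sw_both G ws H H' : is_graph dir G -> swaps_seq dir F G ws = Some H ->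
  swaps_seq dir F G (rev ws) = Some H' -> H = G.
Proof.
move=> gG h1 h2; have L := swaps_seq_rev gG h1; have gH := swaps_seq_graph gG h1.
by rewrite (swaps_seq_parity gH L h2).
Qed.

Lemma Vz_sw G Gs ws : inGG dir G0 F G -> inGG dir G0 F Gs ->
  swaps_seq dir F G ws = Some Gs -> Vz dir G0 F G ws = Vz dir G0 F Gs ws.
Proof.
move=> hG hGs hs; have gG : is_graph dir G by case/and3P: hG.
have gGs : is_graph dir Gs by case/and3P: hGs.
case: (eqVneq Gs G) => [-> //|nGs].
have L := swaps_seq_rev gG hs.
have z1 : Pw dir G0 F G (rev ws) = 0%R.
  apply/eqP; apply: contraNT nGs => /Pw_swaps [H' h]; apply/eqP; exact: sw_both hs h.
have z2 : Pw dir G0 F Gs ws = 0%R.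
  apply/eqP; apply: contraNT nGs => /Pw_swaps [H' h].
  have := sw_both gGs L; rewrite revK => /(_ _ h) ->; by [].
have e1 := DB hG hGs hs.
rewrite /Vz z1 z2 -e1; case: (eqVneq (rev ws) ws) => [e|ne] /=.
  by rewrite !addr0 e z2.
by rewrite addr0 add0r.
Qed.

Lemma Vz_rev G w : Vz dir G0 F G (rev w) = Vz dir G0 F G w.
Proof.
rewrite /Vz revK; case: (eqVneq (rev w) w) => [e|ne]; first by rewrite e.
by rewrite /= addrC.
Qed.

Lemma Vz_Kmap G w : inGG dir G0 F G -> inGG dir G0 F (Kmap dir F w G) ->
  Vz dir G0 F G w = Vz dir G0 F (Kmap dir F w G) w.
Proof.
move=> hG hK.
have gen : forall ws, (ws = w \/ ws = rev w) -> swaps_seq dir F G ws = Some (Kmap dir F w G) ->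
    Vz dir G0 F G w = Vz dir G0 F (Kmap dir F w G) w.
  move=> ws [->|->] hs; first exact: Vz_sw.
  by rewrite -Vz_rev (Vz_sw hG hK hs) Vz_rev.
have [C|C] := canon_cases w;
  have [E|[_ E]|[_ _ E]] := KmapP w G; try by rewrite E.
- by apply: (gen (canon w)) => //; left.
- by apply: (gen (rev (canon w))) => //; right; rewrite C.
- by apply: (gen (canon w)) => //; right.
- by apply: (gen (rev (canon w))) => //; left; rewrite C revK.
Qed.

Lemma lexle_total (s1 s2 : seq nat) : lexle s1 s2 || lexle s2 s1.
Proof.
elim: s1 s2 => [|x s1 IH] [|y s2] //=.
by case: (ltngtP x y) => //= e; rewrite ?e ?eqxx /= ?orbT.
Qed.

Lemma lexle_anti (s1 s2 : seq nat) : lexle s1 s2 -> lexle s2 s1 -> s1 = s2.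
Proof.
elim: s1 s2 => [|x s1 IH] [|y s2] //=.
case: (ltngtP x y) => //= e h1 h2; rewrite e (IH s2) //.
Qed.

Lemma canon_rev (w : seq V) : canon (rev w) = canon w.
Proof.
rewrite /canon revK.
set m := [seq val (enum_rank x) | x <- w].
set mr := [seq val (enum_rank x) | x <- rev w].
case E1: (lexle m mr); case E2: (lexle mr m) => //.
- have e := lexle_anti E1 E2.
  have inj : injective (fun x : V => val (enum_rank x)).
    by move=> x y /= /val_inj /enum_rank_inj.
  by rewrite -(inj_map inj e).
- by move: (lexle_total m mr); rewrite E1 E2.
Qed.

Lemma Kmap_rev w G : Kmap dir F (rev w) G = Kmap dir F w G.
Proof. by rewrite /Kmap canon_rev. Qed.

Lemma inW_rev (w : seq V) : inW (rev w) = inW w.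
Proof.
case: w => [|x t] //; rewrite /inW size_rev rev_cons_last /=.
rewrite last_rev head_belast; congr [&& _, _ & _]; exact: eq_sym.
Qed.

Lemma QD n G Gs : is_graph dir G -> Qpart dir G0 F n G Gs = Dpart dir G0 F n G Gs.
Proof.
move=> gG; rewrite /Qpart /Dpart.
pose g (w : seq V) := (Pw dir G0 F G w * (Kmap dir F w G == Gs)%:R)%R.
transitivity (\sum_(w : n.-tuple V | inW w) g w)%R.
  apply: eq_bigr => w _; rewrite /g.
  case: (eqVneq (Pw dir G0 F G w) 0%R) => [->|h]; first by rewrite !mul0r.
  by rewrite (Pw_Kmap gG h).
rewrite (bigID (fun w : n.-tuple V => canon w == w)) /=.
have inj : injective (fun w : n.-tuple V => [tuple of rev w]).
  by move=> u v /(congr1 val) /= /(congr1 rev); rewrite !revK => /val_inj.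
rewrite [X in (_ + X)%R](reindex_inj inj) /=.
rewrite [X in (_ + X)%R](eq_bigl (fun w : n.-tuple V => (inW w && (canon w == w)) && (rev w != w))); last first.
  move=> w /=; rewrite inW_rev canon_rev.
  case: (canon_cases w) => ->; first by rewrite eqxx andbT eq_sym.
  by rewrite eqxx andbF -andbA; case: eqP; rewrite ?andbF.
rewrite [X in (_ + X)%R]big_mkcondr /=.
rewrite -big_split /=; apply: eq_bigr => w _.
rewrite /g /Vz /Kker Kmap_rev mulrDl.
by case: ifP => _; rewrite ?mul0r ?addr0.
Qed.

End S.

Unset Implicit Arguments.
Local Open Scope ring_scope.

Theorem lemma2 (V : finType) (dir : bool) (G0 F : {set V * V})
    (hG0 : is_graph dir G0) :
  (* decomposition: Q(G,G') = sum_z V_G(z) K_z(G,G') (series over lengths) *)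
  (forall G Gs : {set V * V}, inGG dir G0 F G -> inGG dir G0 F Gs ->
     forall eps : rat, 0 < eps -> exists N : nat, forall n : nat, (N <= n)%N ->
       `| \sum_(l < n) Qpart dir G0 F l G Gs - \sum_(l < n) Dpart dir G0 F l G Gs | < eps)
  /\
  (* symmetry of the decomposition *)
  (forall (G Gs : {set V * V}) (w : seq V), inGG dir G0 F G -> inGG dir G0 F Gs ->
     inW w -> 0 < Kker dir F w G Gs -> Vz dir G0 F G w = Vz dir G0 F Gs w)
  /\
  (* each K_z is symmetric, hence reversible w.r.t. the uniform distribution *)
  (forall (G Gs : {set V * V}) (w : seq V), inGG dir G0 F G -> inGG dir G0 F Gs ->
     inW w ->
     Kker dir F w G Gs = Kker dir F w Gs G /\
     unif dir G0 F G * Kker dir F w G Gs = unif dir G0 F Gs * Kker dir F w Gs G).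
Proof.
split; [|split].
- move=> G Gs hG hGs eps he; exists 0%N => n _.
  have gG : is_graph dir G by case/and3P: hG.
  under eq_bigr => l _ do rewrite (QD G0 F l Gs gG).
  by rewrite subrr normr0.
- move=> G Gs w hG hGs _; rewrite /Kker; case: eqP => [e _|]; last by rewrite ltxx.
  rewrite -e; apply: Vz_Kmap => //; by rewrite e.
- move=> G Gs w hG hGs _.
  have gG : is_graph dir G by case/and3P: hG.
  have gGs : is_graph dir Gs by case/and3P: hGs.
  have ek : Kker dir F w G Gs = Kker dir F w Gs G.
    rewrite /Kker; congr ((nat_of_bool _)%:R)%R; apply/eqP/eqP => e.
    + by rewrite -e Kmap_invol.
    + by rewrite -e Kmap_invol.
  by split => //; rewrite ek /unif hG hGs.
Qed.
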